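(* Let $(m_{1},\ldots,m_{\mu})$ be a $\mu$-tuple of even integers. For any unoriented $\mu$-component welded link $L$, the welded link $L(m_{1},\ldots,m_{\mu})$ can be deformed into the $\mu$-component trivial link by unoriented $V^{2}$-moves (together with welded Reidemeister moves).
   Context: An unoriented virtual link diagram is the image of an immersion of finitely many circles in the plane with transverse double points, each a classical crossing (with over/under information) or a virtual crossing. Welded Reidemeister moves are R1–R3, the virtual moves VR1–VR4, and the OC move (a strand passing over two strands at classical crossings may slide across a virtual crossing of those two strands); an unoriented welded link is an equivalence class of unoriented diagrams under these moves. The trivial $\mu$-component link is represented by $\mu$ disjoint circles without crossings. Multiplexing: let $D=\bigcup_{i=1}^{\mu}D_i$ be an unoriented $\mu$-component diagram and $(m_1,\dots,m_\mu)\in\mathbb{Z}^\mu$. View a classical crossing whose over-strand belongs to $D_j$ locally as a $2$-braid generator $\sigma$. Its multiplexing associated with $m_j$ replaces $\sigma$ by the word $\sigma\tau\sigma\tau\cdots\tau\sigma$ with $m_j$ letters $\sigma$ and $m_j-1$ virtual crossings $\tau$ if $m_j>0$; by a single virtual crossing $\tau$ if $m_j=0$; and by $\sigma^{-1}\tau\sigma^{-1}\cdots\tau\sigma^{-1}$ with $|m_j|$ letters $\sigma^{-1}$ (the crossing with over/under switched) if $m_j<0$. $D(m_1,\dots,m_\mu)$ is obtained by doing this at every classical crossing of $D$; its welded class depends only on the welded class $L$ of $D$ and is denoted $L(m_1,\dots,m_\mu)$. The unoriented $V^{2}$-move: inside a disk with two arcs $a,b$, replace parallel arcs without crossings by the tangle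 $(\sigma\tau)^{2}$, where $\sigma$ is a classical crossing with $b$ over $a$ and $\tau$ a virtual crossing, or the reverse; orientations disregarded. *)

(* Defs.v *)
From mathcomp Require Import all_boot all_order all_algebra.
From Stdlib Require Import Relations.
Set Implicit Arguments. Unset Strict Implicit. Unset Printing Implicit Defensive.
Import GRing.Theory Num.Theory.
Local Open Scope ring_scope.

(* An endpoint of an arrow (= classical crossing) in a Gauss diagram:
   (label, is_over, sign).  is_over = true : the endpoint lies on the over
   strand (tail of the arrow), false : on the under strand (head).
   sign = true : positive crossing (w.r.t. the current orientations).
   Both endpoints of an arrow carry its sign. *)
Definition label := seq nat.
Definition letter := (label * bool * bool)%type.
Definition lbl (e : letter) : label := e.1.1.
Definition isover (e : letter) : bool := e.1.2.
Definition sgn (e : letter) : bool := e.2.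

(* A mu-component (oriented) Gauss diagram: one cyclic word per component
   D_i (i < mu = size D), read along the orientation of the component.
   Virtual crossings are invisible in Gauss diagrams, so diagrams modulo
   the virtual moves VR1-VR4 are Gauss diagrams modulo cyclic rotation of
   the component words (rotation is a move below). *)
Definition diagram := seq (seq letter).

Definition wf (D : diagram) : Prop :=
  forall l : label,
    count (fun e => lbl e == l) (flatten D) = 0%N \/
    exists s : bool,
      [/\ count (fun e => lbl e == l) (flatten D) = 2%N,
          count (pred1 (l, true, s)) (flatten D) = 1%N &
          count (pred1 (l, false, s)) (flatten D) = 1%N].

Definition trivial_diagram (mu : nat) : diagram := nseq mu [::].

(* A context is a diagram in which some letters are replaced by numbered
   holes (inr k).  Filling the holes by words gives a diagram; a local move
   replaces the words filling the holes by other words. *)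
Definition ctx := seq (seq (letter + nat)).

Definition fill (C : ctx) (f : nat -> seq letter) : diagram :=
  map (fun w => flatten (map (fun x => match x with
                                      | inl e => [:: e]
                                      | inr k => f k end) w)) C.

Definition holes (C : ctx) (n : nat) : Prop :=
  forall k : nat, count (pred1 (inr k)) (flatten C) = (k < n)%N.

Definition R1_pat (n : nat) (f g : nat -> seq letter) : Prop :=
  n = 1%N /\ f 0%N = [::] /\
  exists (l : label) (s : bool),
    g 0%N = [:: (l, true, s); (l, false, s)] \/
    g 0%N = [:: (l, false, s); (l, true, s)].

(* R2: two arrows with the same over strand and opposite signs, tails
   adjacent on one strand and heads adjacent on another strand, in either
   relative order (the two orientation cases of R2). *)
Definition R2_pat (n : nat) (f g : nat -> seq letter) : Prop :=
  n = 2%N /\ f 0%N = [::] /\ f 1%N = [::] /\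
  exists (l1 l2 : label) (s : bool),
    g 0%N = [:: (l1, true, s); (l2, true, ~~ s)] /\
    (g 1%N = [:: (l1, false, s); (l2, false, ~~ s)] \/
     g 1%N = [:: (l2, false, ~~ s); (l1, false, s)]).

(* R3: three strands T (top), M (middle), B (bottom) with arrows
   x : T -> M, y : T -> B, z : M -> B, the two endpoints on each strand being
   adjacent.  a (resp. b, c) says whether x comes before y on T (resp. x
   before z on M, y before z on B).  The sign condition below is exactly the set of
   (order, sign) data realised by three strands in general position forming
   a triangle (computed from the straight-line model). *)
Definition R3_word (x y z : label) (ex ey ez : bool) (a b c : bool)
  (k : nat) : seq letter :=
  match k with
  | 0%N => if a then [:: (x, true, ex); (y, true, ey)]
           else [:: (y, true, ey); (x, true, ex)]
  | 1%N => if b then [:: (x, false, ex); (z, true, ez)]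
           else [:: (z, true, ez); (x, false, ex)]
  | _ => if c then [:: (y, false, ey); (z, false, ez)]
         else [:: (z, false, ez); (y, false, ey)]
  end.

Definition R3_pat (n : nat) (f g : nat -> seq letter) : Prop :=
  n = 3%N /\
  exists (x y z : label) (ex ey ez a b c : bool),
    [/\ (ex == ey) = (b == c), (ey == ez) = (a == b),
        forall k, (k < 3)%N -> f k = R3_word x y z ex ey ez a b c k &
        forall k, (k < 3)%N -> g k = R3_word x y z ex ey ez (~~ a) (~~ b) (~~ c) k].

Definition OC_pat (n : nat) (f g : nat -> seq letter) : Prop :=
  n = 1%N /\
  exists (l1 l2 : label) (s1 s2 : bool),
    f 0%N = [:: (l1, true, s1); (l2, true, s2)] /\
    g 0%N = [:: (l2, true, s2); (l1, true, s1)].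

(* unoriented V^2-move: the tangle (sigma tau)^2 = two arrows with the same
   direction and the same sign, tails adjacent on one strand, heads adjacent
   on another strand; since orientations are disregarded, both relative
   orders occur. *)
Definition V2_pat (n : nat) (f g : nat -> seq letter) : Prop :=
  n = 2%N /\ f 0%N = [::] /\ f 1%N = [::] /\
  exists (l1 l2 : label) (s : bool),
    g 0%N = [:: (l1, true, s); (l2, true, s)] /\
    (g 1%N = [:: (l1, false, s); (l2, false, s)] \/
     g 1%N = [:: (l2, false, s); (l1, false, s)]).

Definition local_step (P : nat -> (nat -> seq letter) -> (nat -> seq letter) -> Prop)
  (D D' : diagram) : Prop :=
  exists (C : ctx) (n : nat) (f g : nat -> seq letter),
    [/\ holes C n, P n f g, D = fill C f & D' = fill C g].

Definition rotate_comp (D : diagram) (i k : nat) : diagram :=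
  set_nth [::] D i (rot k (nth [::] D i)).

(* reversing the orientation of component i: its word is reversed and the
   crossings between D_i and another component change sign (self-crossings
   of D_i keep their sign).  This makes the theory unoriented. *)
Definition reverse_comp (D : diagram) (i : nat) : diagram :=
  let w := nth [::] D i in
  let mixed (l : label) := count (fun e => lbl e == l) w == 1%N in
  let fl (e : letter) : letter :=
    if mixed (lbl e) then (lbl e, isover e, ~~ sgn e) else e in
  [seq map fl (if j == i then rev (nth [::] D j) else nth [::] D j)
  | j <- iota 0 (size D)].

Inductive welded_step (D D' : diagram) : Prop :=
  | ws_R1 of wf D & wf D' & local_step R1_pat D D'
  | ws_R2 of wf D & wf D' & local_step R2_pat D D'
  | ws_R3 of wf D & wf D' & local_step R3_pat D D'
  | ws_OC of wf D & wf D' & local_step OC_pat D D'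
  | ws_rot (i k : nat) of wf D & (i < size D)%N & D' = rotate_comp D i k
  | ws_rev (i : nat) of wf D & (i < size D)%N & D' = reverse_comp D i.

Inductive V2_welded_step (D D' : diagram) : Prop :=
  | vs_welded of welded_step D D'
  | vs_V2 of wf D & wf D' & local_step V2_pat D D'.

Definition V2_welded_equiv : relation diagram :=
  clos_refl_sym_trans diagram V2_welded_step.

Definition over_comp (D : diagram) (l : label) : nat :=
  find (fun w => has (fun e => (lbl e == l) && isover e) w) D.

(* An arrow (crossing) whose over strand lies on D_j is replaced by the
   Gauss diagram of sigma tau sigma ... tau sigma (m_j letters sigma):
   m_j parallel copies of the arrow with the same sign, endpoints consecutive
   on both strands (copy k of arrow l gets label k :: l); for m_j = 0 it is
   removed (a virtual crossing); for m_j < 0 it is replaced by |m_j| copies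
   of the switched crossing sigma^-1 (direction reversed, sign changed). *)
Definition multiplex_letter (D : diagram) (m : seq int) (e : letter)
  : seq letter :=
  let mj := nth 0 m (over_comp D (lbl e)) in
  if 0 <= mj then
    [seq (k :: lbl e, isover e, sgn e) | k <- iota 0 `|mj|%N]
  else
    [seq (k :: lbl e, ~~ isover e, ~~ sgn e) | k <- iota 0 `|mj|%N].

Definition multiplex (D : diagram) (m : seq int) : diagram :=
  [seq flatten [seq multiplex_letter D m e | e <- w] | w <- D].

(* Main.v *)
Require Import Defs.
From mathcomp Require Import all_boot all_order all_algebra.
From Stdlib Require Import Relations.
From mathcomp Require Import zify.

Set Implicit Arguments. Unset Strict Implicit. Unset Printing Implicit Defensive.

Definition qletter (c : label -> nat) (d : label -> bool) (e : letter) : seq letter :=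
  [seq (k :: lbl e, addb (isover e) (d (lbl e)), addb (sgn e) (d (lbl e)))
  | k <- iota 0 (2 * c (lbl e))].

Definition Q (D : diagram) c d : diagram :=
  [seq flatten [seq qletter c d e | e <- w] | w <- D].

Lemma flatten_mapflat (T U : Type) (F : T -> seq U) (D : seq (seq T)) :
  flatten [seq flatten (map F w) | w <- D] = flatten (map F (flatten D)).
Proof. by elim: D => //= w D IH; rewrite map_cat flatten_cat IH. Qed.

Lemma count_flat_map (T U : Type) (a : pred U) (F : T -> seq U) (P : pred T) s :
  (forall x, count a (F x) = P x) -> count a (flatten (map F s)) = count P s.
Proof. by move=> H; elim: s => //= x s IH; rewrite count_cat IH H. Qed.

Lemma count_iota_mem k n : count (pred1 k) (iota 0 n) = (k < n).
Proof. by rewrite count_uniq_mem ?iota_uniq // mem_iota. Qed.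

Lemma count_andb (T : Type) (a : pred T) (b : bool) s :
  count (fun x => a x && b) s = if b then count a s else 0.
Proof. by case: b; elim: s => //= x s ->; rewrite ?andbT ?andbF. Qed.

Lemma wf_Q D c d : wf D -> wf (Q D c d).
Proof.
move=> wfD L; rewrite /Q flatten_mapflat.
case: L => [|k l].
  left; rewrite (@count_flat_map _ _ _ _ pred0); first by rewrite count_pred0.
  by move=> e; rewrite /qletter; elim: (iota _ _).
have Hl : count (fun e => lbl e == k :: l) (flatten [seq qletter c d i | i <- flatten D])
   = count (fun e => (lbl e == l) && (k < 2 * c l)) (flatten D).
  apply: count_flat_map => e; rewrite /qletter count_map.
  case: (eqVneq (lbl e) l) => [<-|ne] /=.
    rewrite -count_iota_mem; apply: eq_count => x /=; by rewrite eqseq_cons eqxx ?andbT.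
  by apply/eqP; rewrite -leqn0 leqNgt -has_count; apply/hasPn => x _ /=;
     rewrite eqseq_cons (negbTE ne) andbF.
have Hp : forall b s' : bool, count (pred1 (k :: l, b, s')) (flatten [seq qletter c d i | i <- flatten D])
   = count (fun e => (e == (l, addb b (d l), addb s' (d l))) && (k < 2 * c l)) (flatten D).
  move=> b s'; apply: count_flat_map => e; rewrite /qletter count_map.
  case: e => [[le o] sg]; rewrite /lbl /isover /sgn /=.
  case: (eqVneq le l) => [->|ne] /=.
    have -> : ((l, o, sg) == (l, b (+) d l, s' (+) d l)) = ((o (+) d l == b) && (sg (+) d l == s')).
      by rewrite !xpair_eqE eqxx; case: o sg b s' (d l) => [] [] [] [] [].
    case E: ((o (+) d l == b) && (sg (+) d l == s')) => /=.
      rewrite -count_iota_mem; apply: eq_count => x /=.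
      rewrite !xpair_eqE eqseq_cons eqxx andbT; move/andP: E => [/eqP -> /eqP ->].
      by rewrite !eqxx !andbT.
    apply/eqP; rewrite -leqn0 leqNgt -has_count; apply/hasPn => x _ /=.
    rewrite !xpair_eqE eqseq_cons eqxx andbT.
    by apply/negP => /andP[/andP[_ H1] H2]; rewrite H1 H2 in E.
  rewrite !xpair_eqE (negbTE ne) /=.
  apply/eqP; rewrite -leqn0 leqNgt -has_count; apply/hasPn => x _ /=.
  by rewrite !xpair_eqE eqseq_cons (negbTE ne) andbF.
rewrite Hl count_andb.
case Hk: (k < 2 * c l); last by left.
case: (wfD l) => [->|[s [H1 H2 H3]]]; first by left.
right; exists (s (+) d l); split => //.
  by apply: etrans (Hp _ _) _; rewrite count_andb Hk addbK; case: (d l).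
by apply: etrans (Hp _ _) _; rewrite count_andb Hk addbK; case: (d l).
Qed.

Definition dec (c : label -> nat) (l0 : label) : label -> nat :=
  fun l => if l == l0 then (c l).-1 else c l.

Lemma count_le3 (T : Type) (a b c P : pred T) s :
  (forall x, a x + b x + c x <= P x) -> count a s + count b s + count c s <= count P s.
Proof.
move=> H; elim: s => //= x s IH; move: (H x) IH.
case: (a x); case: (b x); case: (c x); case: (P x) => /=; lia.
Qed.

Lemma sgn_fact (s : seq letter) l0 s0 :
  count (fun e => lbl e == l0) s = 2 -> count (pred1 (l0,true,s0)) s = 1 ->
  count (pred1 (l0,false,s0)) s = 1 ->
  forall e, e \in s -> lbl e = l0 -> sgn e = s0.
Proof.
move=> H0 H1 H2 [[le o] sg] He El; rewrite /lbl /= in El; subst le; rewrite /sgn /=.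
apply/eqP; apply/negP => ne.
have := @count_le3 _ (pred1 (l0,true,s0)) (pred1 (l0,false,s0)) (pred1 (l0,o,sg))
  (fun e => lbl e == l0) s.
rewrite H0 H1 H2.
have : 0 < count (pred1 (l0, o, sg)) s by rewrite -has_count has_pred1.
move=> Hp Hc.
suff : 1 + 1 + count (pred1 (l0, o, sg)) s <= 2 by lia.
apply: Hc => -[[le' o'] sg'] /=.
rewrite !xpair_eqE /lbl /=.
case: (le' == l0) => //=.
clear -ne; move/negP/negbTE: ne; case: o o' sg sg' s0 => [] [] [] [] [] //=.
Qed.

Lemma flatten_inl (A B : Type) (h : B -> seq A) (xs : seq A) :
  flatten [seq match x with inl e => [:: e] | inr k => h k end
          | x <- [seq inl x | x <- xs] : seq (A + B)] = xs.
Proof. by elim: xs => //= x xs ->. Qed.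

Lemma V2_step D c d l0 s0 :
  wf D -> 0 < c l0 ->
  count (fun e => lbl e == l0) (flatten D) = 2 ->
  count (pred1 (l0,true,s0)) (flatten D) = 1 ->
  count (pred1 (l0,false,s0)) (flatten D) = 1 ->
  V2_welded_step (Q D (dec c l0) d) (Q D c d).
Proof.
move=> wfD Hc H0 H1 H2.
have SG := sgn_fact H0 H1 H2.
pose hole (e : letter) : nat := if addb (isover e) (d l0) then 0 else 1.
pose cletter (e : letter) : seq (letter + nat) :=
  [seq inl x | x <- qletter (dec c l0) d e] ++
  (if lbl e == l0 then [:: inr (hole e)] else [::]).
pose C : ctx := [seq flatten [seq cletter e | e <- w] | w <- D].
pose p := 2 * (c l0).-1.
pose s := addb s0 (d l0).
pose f : nat -> seq letter := fun _ => [::].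
pose g : nat -> seq letter := fun k =>
  if k == 0 then [:: (p :: l0, true, s); (p.+1 :: l0, true, s)]
  else [:: (p :: l0, false, s); (p.+1 :: l0, false, s)].
have fillC : forall h, fill C h =
  [seq flatten [seq qletter (dec c l0) d e ++ (if lbl e == l0 then h (hole e) else [::])
               | e <- w] | w <- D].
  move=> h; rewrite /fill /C -map_comp; apply: eq_map => w /=.
  elim: w => //= e w IH; rewrite map_cat flatten_cat IH /cletter map_cat flatten_cat.
  rewrite flatten_inl; by case: (lbl e == l0) => /=; rewrite ?cats0 ?catA.
apply: vs_V2; [exact: wf_Q | exact: wf_Q |].
rewrite /local_step; exists C, 2, f, g; split.
- move=> k; rewrite /C flatten_mapflat.
  rewrite (@count_flat_map _ _ _ _ (fun e => (lbl e == l0) && (hole e == k))); last first.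
    move=> e; rewrite /cletter count_cat count_map.
    rewrite (@eq_count _ _ pred0); last by [].
    by rewrite count_pred0; case: (lbl e == l0) => //=; rewrite addn0.
  have Hb : forall b, count (fun e => (lbl e == l0) && ((isover e (+) d l0) == b)) (flatten D) = 1.
    move=> b; apply: etrans (_ : count (pred1 (l0, b (+) d l0, s0)) (flatten D) = 1).
      apply: eq_in_count => -[[le o] sg] He.
      rewrite /lbl /isover /=; case: (eqVneq le l0) => [El|ne].
        subst le; have := SG _ He erefl; rewrite /sgn /= => ->.
        by clear He; rewrite !xpair_eqE !eqxx /=; case: o b (d l0) => [] [] [].
      by rewrite !xpair_eqE (negbTE ne).
    by case: b; case: (d l0).
  case: k => [|[|k]] /=.
  - apply: etrans _ (Hb true); apply: eq_count => e; rewrite /hole; by case: (isover e (+) d l0).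
  - apply: etrans _ (Hb false); apply: eq_count => e; rewrite /hole; by case: (isover e (+) d l0).
  - rewrite (@eq_count _ _ pred0) ?count_pred0 // => e /=; rewrite /hole.
    by case: (isover e (+) d l0); rewrite andbF.
- by do 3 split => //; exists (p :: l0), (p.+1 :: l0), s; split => //; left.
- rewrite fillC /Q; apply: eq_map => w; congr flatten; apply: eq_map => e.
  by case: (lbl e == l0); rewrite cats0.
- rewrite fillC /Q; apply/eq_in_map => w Hw /=; congr flatten; apply/eq_in_map => e He /=.
  have Hf : e \in flatten D by apply/flattenP; exists w.
  case: (eqVneq (lbl e) l0) => [El|ne]; last first.
    by rewrite cats0 /qletter /dec (negbTE ne).
  have Es := SG _ Hf El.
  symmetry; rewrite /qletter /dec El eqxx Es.
  have -> : 2 * c l0 = p + 2 by rewrite /p; lia.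
  rewrite iotaD map_cat add0n /= /g /hole /s.
  by case: (isover e (+) d l0).
Qed.

Definition Nm (D : diagram) (c : label -> nat) := sumn [seq c (lbl e) | e <- flatten D].

Lemma N_dec D c l0 : 0 < c l0 ->
  Nm D c = Nm D (dec c l0) + count (fun e => lbl e == l0) (flatten D).
Proof.
move=> Hc; rewrite /Nm; elim: (flatten D) => //= e s ->.
rewrite /dec; case: (lbl e == l0) / eqP => [->|_] /=; lia.
Qed.

Lemma Q_zero D c d : ~~ has (fun e => 0 < c (lbl e)) (flatten D) ->
  Q D c d = trivial_diagram (size D).
Proof.
move/hasPn => H; rewrite /Q /trivial_diagram.
elim: D H => //= w D IH H; rewrite IH; last first.
  move=> e He; apply: H; by rewrite (@mem_cat _ e w) He orbT.
congr (_ :: _); elim: w H => //= e w IHw H.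
have /H : e \in flatten ((e :: w) :: D) by rewrite /= inE eqxx.
rewrite -leqNgt leqn0 /qletter => /eqP ->; rewrite muln0 /=.
by apply: IHw => x Hx; apply: H; rewrite /= inE; apply/orP; right; exact: Hx.
Qed.

Lemma main_ind D d : wf D -> forall n c, Nm D c <= n ->
  V2_welded_equiv (Q D c d) (trivial_diagram (size D)).
Proof.
move=> wfD n; elim: n => [|n IH] c Hn;
  (case: (boolP (has (fun e => 0 < c (lbl e)) (flatten D))) => Hh;
   last by rewrite Q_zero //; apply: rst_refl);
  case/hasP: Hh => e0 He0 Hc.
  suff : 0 < Nm D c by lia.
  rewrite /Nm; elim: (flatten D) He0 => //= x s IHs; rewrite inE.
  by case/orP => [/eqP <-|/IHs]; lia.
case: (wfD (lbl e0)) => [H0|[s0 [H0 H1 H2]]].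
  have : 0 < count (fun e => lbl e == lbl e0) (flatten D).
    by rewrite -has_count; apply/hasP; exists e0.
  by rewrite H0.
have Hs := V2_step d wfD Hc H0 H1 H2.
rewrite /V2_welded_equiv; apply: (@rst_trans _ _ _ (Q D (dec c (lbl e0)) d)).
  by apply: rst_sym; apply: rst_step; exact: Hs.
apply: IH; move: Hn; rewrite (N_dec D Hc) H0; lia.
Qed.

Lemma multiplex_Q D m : all (fun k : int => (2 %| k)%Z) m ->
  multiplex D m = Q D (fun l => `|nth 0%R m (over_comp D l)|%N %/ 2)
                      (fun l => ~~ (0 <= nth 0%R m (over_comp D l))%R).
Proof.
move=> Hm; rewrite /multiplex /Q; apply: eq_map => w; congr flatten.
apply: eq_map => e; rewrite /multiplex_letter /qletter.
set mj := nth 0%R m (over_comp D (lbl e)).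
have Hev : (2 %| `|mj|%N)%N.
  rewrite /mj; case: (ltnP (over_comp D (lbl e)) (size m)) => H.
    by move/allP: Hm => /(_ _ (mem_nth 0%R H)); rewrite dvdzE.
  by rewrite nth_default.
rewrite mulnC (divnK Hev).
by case: (0 <= mj)%R => /=; apply: eq_map => k; rewrite ?addbF ?addbT.
Qed.

Theorem proposition6p3 (D : diagram) (m : seq int) :
  wf D -> size m = size D -> all (fun k : int => (2 %| k)%Z) m ->
  V2_welded_equiv (multiplex D m) (trivial_diagram (size D)).
Proof.
move=> wfD _ Hm; rewrite (multiplex_Q D Hm).
exact: (main_ind _ wfD (leqnn _)).
Qed.
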